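(* Let $G=(X,b,m,c)$ be a weighted graph with $c=0$, let $p\in(1,\infty)$, let $V\subseteq X$ and $\psi,\theta\colon X\to\mathbb{R}$. A function $u\in K_{\psi,\theta}(V)$ is a solution to the obstacle problem on $V$ with obstacle $\psi$ and boundary data $\theta$ if and only if $$\mathcal{E}_{p,\overline V}(u,u)=\min\{\mathcal{E}_{p,\overline V}(v,v):v\in K_{\psi,\theta}(V)\}.$$
   Context: Weighted graph $G=(X,b,m,c)$: $X$ countably infinite; $b$ symmetric, nonnegative, zero on the diagonal, $\sum_yb(x,y)<\infty$; $m>0$; $c\ge0$; $x\sim y$ iff $b(x,y)>0$; $X$ connected. $\partial_eV=\{y\in X\setminus V:y\sim z\text{ for some }z\in V\}$, $\overline V=V\cup\partial_eV$. $a^{\langle p-1\rangle}=|a|^{p-2}a$. For $U\subseteq X$ and functions $u,w$, $\mathcal{E}_{p,U}(u,w)=\frac12\sum_{x,y\in U}b(x,y)(u(x)-u(y))^{\langle p-1\rangle}(w(x)-w(y))$ (with $c=0$), whenever the sum converges absolutely. $D^p(\overline V)=\{v\colon X\to\mathbb{R}:\sum_{x,y\in\overline V}b(x,y)|v(x)-v(y)|^p<\infty\}$. $K_{\psi,\theta}(V)=\{v\in D^p(\overline V):v\ge\psi\text{ on }V,\ v=\theta\text{ on }\partial_eV\}$. A solution to the obstacle problem on $V$ with obstacle $\psi$ and boundary data $\theta$ is $u\in K_{\psi,\theta}(V)$ with $\mathcal{E}_{p,\overline V}(u,v-u)\ge0$ for all $v\in K_{\psi,\theta}(V)$. *)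

(* Defs.v *)
From HB Require Import structures.
From mathcomp Require Import all_boot all_order all_algebra.
From mathcomp Require Import all_classical all_reals all_analysis.
From Stdlib Require Import Relations.
Set Implicit Arguments. Unset Strict Implicit. Unset Printing Implicit Defensive.
Import Order.TTheory GRing.Theory Num.Theory.
Local Open Scope classical_set_scope.
Local Open Scope ring_scope.

Section Defs.
Variables (R : realType) (X : countType).

Definition adj (b : X -> X -> R) (x y : X) : Prop := 0 < b x y.

(* weighted graph (X,b,m,c) with c = 0 (c does not appear) *)
Definition weighted_graph (b : X -> X -> R) (m : X -> R) : Prop :=
  infinite_set [set: X] /\
  (forall x y, b x y = b y x) /\
  (forall x y, 0 <= b x y) /\
  (forall x, b x x = 0) /\
  (forall x, (\esum_(y in [set: X]) (b x y)%:E < +oo)%E) /\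
  (forall x, 0 < m x) /\
  (forall x y, clos_refl_trans X (adj b) x y).

Definition ext_boundary (b : X -> X -> R) (V : set X) : set X :=
  [set y | ~ V y /\ exists z, V z /\ adj b y z].
Definition closure_V (b : X -> X -> R) (V : set X) : set X :=
  V `|` ext_boundary b V.

(* signed power a^{<p-1>} = |a|^{p-2} a  (= sg a * |a|^{p-1}, value 0 at 0) *)
Definition spow (p a : R) : R := Num.sg a * (`|a| `^ (p - 1)).

(* real value of an absolutely convergent sum over a countable set:
   sum of positive parts minus sum of negative parts *)
Definition rsum (T : choiceType) (D : set T) (f : T -> R) : R :=
  fine (\esum_(i in D) (Num.max (f i) 0)%:E)%E
  - fine (\esum_(i in D) (Num.max (- f i) 0)%:E)%E.

Definition Ep (b : X -> X -> R) (p : R) (U : set X) (u w : X -> R) : R :=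
  2^-1 * rsum (U `*` U)
    (fun xy : X * X => b xy.1 xy.2 * spow p (u xy.1 - u xy.2) * (w xy.1 - w xy.2)).

Definition Dp (b : X -> X -> R) (p : R) (V : set X) : set (X -> R) :=
  [set v | (\esum_(xy in closure_V b V `*` closure_V b V)
              (b xy.1 xy.2 * `|v xy.1 - v xy.2| `^ p)%:E < +oo)%E].

Definition Kset (b : X -> X -> R) (p : R) (V : set X) (psi theta : X -> R)
  : set (X -> R) :=
  [set v | Dp b p V v /\ (forall x, V x -> psi x <= v x)
           /\ (forall x, ext_boundary b V x -> v x = theta x)].

Definition obstacle_solution (b : X -> X -> R) (p : R) (V : set X)
  (psi theta : X -> R) (u : X -> R) : Prop :=
  Kset b p V psi theta u /\
  forall v, Kset b p V psi theta v ->
    0 <= Ep b p (closure_V b V) u (v \- u).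

End Defs.

(* Main.v *)
Require Import Defs.
From HB Require Import structures.
From mathcomp Require Import all_boot all_order all_algebra.
From mathcomp Require Import all_classical all_reals all_analysis.
From mathcomp Require Import ring lra.
Import Order.TTheory GRing.Theory Num.Theory.
Import numFieldNormedType.Exports.
Local Open Scope classical_set_scope.
Local Open Scope ring_scope.
Set Implicit Arguments. Unset Strict Implicit. Unset Printing Implicit Defensive.
Section SpowFacts.
Variables (R : realType) (p : R).
Hypothesis p1 : 1 < p.

Let p0 : 0 < p. Proof. by apply: lt_trans p1. Qed.
Let pm1 : 0 < p - 1. Proof. by rewrite subr_gt0. Qed.

Lemma powR_mono (r x y : R) : 0 <= r -> 0 <= x -> x <= y -> x `^ r <= y `^ r.
Proof.
move=> r0 x0 xy; apply: ge0_ler_powR => //; rewrite nnegrE //.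
exact: le_trans xy.
Qed.

Lemma spow_ge0E a : 0 <= a -> spow p a = a `^ (p - 1).
Proof.
rewrite le_eqVlt => /predU1P[<-|a0].
  by rewrite /spow sgr0 mul0r powR0 ?gt_eqF.
by rewrite /spow gtr0_sg // mul1r gtr0_norm.
Qed.

Lemma spow_lt0E a : a < 0 -> spow p a = - ((- a) `^ (p - 1)).
Proof.
by move=> a0; rewrite /spow ltr0_sg // mulN1r ltr0_norm.
Qed.

Lemma spowN a : spow p (- a) = - spow p a.
Proof. by rewrite /spow sgrN normrN mulNr. Qed.

Lemma spow_mul_self a : spow p a * a = `|a| `^ p.
Proof.
rewrite /spow mulrAC -normrEsg mulr_powRB1 //.
Qed.

Lemma norm_spow a : `|spow p a| = `|a| `^ (p - 1).
Proof.
rewrite /spow normrM normr_sg ger0_norm ?powR_ge0 //.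
have [->|a0] := eqVneq a 0; first by rewrite normr0 powR0 ?gt_eqF // mulr0.
by rewrite mul1r.
Qed.

Lemma spow_bound a c : `|spow p a * c| <= `|a| `^ p + `|c| `^ p.
Proof.
rewrite normrM norm_spow.
have [ca|ac] := leP `|c| `|a|.
  apply: le_trans (_ : `|a| `^ p <= _); last by rewrite lerDl powR_ge0.
  by rewrite -(mulr_powRB1 (normr_ge0 a) p0) [X in _ <= X]mulrC ler_wpM2l ?powR_ge0.
apply: le_trans (_ : `|c| `^ p <= _); last by rewrite lerDr powR_ge0.
rewrite -(mulr_powRB1 (normr_ge0 c) p0) [X in _ <= X]mulrC ler_wpM2r //.
by apply: powR_mono => //; exact: ltW.
Qed.

Lemma spow_bound2 x y z :
  `|spow p x * (y - z)| <= 2 * `|x| `^ p + `|y| `^ p + `|z| `^ p.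
Proof.
rewrite mulrBr; apply: le_trans (ler_normB _ _) _.
have := spow_bound x y; have := spow_bound x z; lra.
Qed.

Lemma spow_mono x y : x <= y -> spow p x <= spow p y.
Proof.
move=> xy.
have [x0|x0] := leP 0 x.
  rewrite !spow_ge0E ?(le_trans x0) //.
  by apply: powR_mono => //; exact: ltW.
rewrite spow_lt0E //.
have [y0|y0] := leP 0 y.
  rewrite spow_ge0E //; apply: le_trans (powR_ge0 _ _).
  by rewrite oppr_le0 powR_ge0.
rewrite spow_lt0E // lerN2; apply: powR_mono; first exact: ltW.
  by rewrite oppr_ge0 ltW.
by rewrite lerN2.
Qed.

Lemma grad_pos a d : 0 < a -> `|a| `^ p + p * spow p a * (d - a) <= `|d| `^ p.
Proof.
move=> a0; rewrite (@spow_ge0E a (ltW a0)) gtr0_norm //.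
set q := p / (p - 1).
have q0 : 0 < q by rewrite divr_gt0.
have pq : p^-1 + q^-1 = 1.
  by rewrite /q invf_div -{1}(div1r p) -mulrDl subrKC mulfV // gt_eqF.
have Y := conjugate_powR (normr_ge0 d) (powR_ge0 a (p - 1)) p0 q0 pq.
have E1 : (a `^ (p - 1)) `^ q = a `^ p.
  by rewrite -powRrM /q mulrC divfK // gt_eqF.
rewrite E1 in Y.
have E2 : a `^ (p - 1) * a = a `^ p.
  by rewrite mulrC mulr_powRB1 // ltW.
have Hq : q^-1 = 1 - p^-1 by rewrite -pq addrAC subrr add0r.
rewrite Hq in Y.
have Hd : d <= `|d| := ler_norm d.
have ge0 : 0 <= a `^ (p - 1) := powR_ge0 _ _.
have Hp : p * p^-1 = 1 by rewrite mulfV // gt_eqF.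
set A := a `^ (p - 1) in Y E2 ge0 *.
set P := a `^ p in Y E2 *.
set Dp := `|d| `^ p in Y *.
have H1 : p * (`|d| * A) <= Dp + P * (p - 1).
  have -> : Dp + P * (p - 1) = p * (Dp / p + P * (1 - p^-1)).
    by field; rewrite gt_eqF.
  by rewrite ler_wpM2l // ltW.
have H2 : p * A * d <= p * A * `|d| by rewrite ler_wpM2l // mulr_ge0 // ltW.
have -> : p * A * (d - a) = p * A * d - p * P by rewrite -E2; ring.
nra.
Qed.

Lemma grad_ineq a d : `|a| `^ p + p * spow p a * (d - a) <= `|d| `^ p.
Proof.
have [a0|a0|->] := ltgtP a 0; last first.
- by rewrite normr0 powR0 ?gt_eqF // /spow sgr0 mul0r mulr0 mul0r add0r powR_ge0.
- exact: grad_pos.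
have H := @grad_pos (-a) (-d); rewrite oppr_gt0 in H; have := H a0.
rewrite !normrN spowN.
by have -> : p * - spow p a * (- d - - a) = p * spow p a * (d - a) by ring.
Qed.

End SpowFacts.
Section SpowCont.
Variables (R : realType) (p : R).
Hypothesis p1 : 1 < p.

Let pm1 : 0 < p - 1. Proof. by rewrite subr_gt0. Qed.

Lemma powR_cont (a : R) : 0 < a -> (fun x : R => x `^ (p - 1)) x @[x --> a] --> a `^ (p - 1).
Proof.
move=> a0.
have H : derivable (fun x : R => x `^ (p - 1)) a 1.
  by apply: derivable_powR; rewrite in_itv /= andbT.
have := differentiable_continuous ((derivable1_diffP _ _).1 H).
exact.
Qed.

Lemma spow_cvg (a : R) : spow p x @[x --> a] --> spow p a.
Proof.
have [a0|a0|->] := ltgtP a 0.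
- rewrite (spow_lt0E p a0).
  have H : {near a, (fun x => - ((- x) `^ (p - 1))) =1 spow p}.
    near=> x; rewrite spow_lt0E //; near: x; exact: lt_nbhsl.
  apply: cvg_trans (near_eq_cvg H) _.
  apply: cvgN.
  have na0 : 0 < - a by rewrite oppr_gt0.
  have := powR_cont na0.
  move=> Hc; apply: (cvg_comp (fun x : R => - x) (fun x : R => x `^ (p - 1)) _ Hc).
  apply: cvgN; exact: cvg_id.
- rewrite (spow_ge0E p1 (ltW a0)).
  have H : {near a, (fun x => x `^ (p - 1)) =1 spow p}.
    near=> x; rewrite (spow_ge0E p1) //; apply: ltW; near: x; exact: lt_nbhsr.
  apply: cvg_trans (near_eq_cvg H) _.
  exact: powR_cont.
- rewrite /spow sgr0 mul0r; apply/cvgr0Pnorm_lt => e e0.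
  have d0 : 0 < e `^ (p - 1)^-1 by rewrite powR_gt0.
  near=> x.
  rewrite -/(spow p x) (norm_spow p1).
  have -> : e = (e `^ (p - 1)^-1) `^ (p - 1).
    by rewrite -powRrM mulVf ?gt_eqF // powRr1 // ltW.
  apply: gt0_ltr_powR => //; first by rewrite nnegrE ltW.
Unshelve. all: by end_near.
Qed.

End SpowCont.
Section RsumFacts.
Variables (R : realType) (T : choiceType).
Implicit Types (D : set T) (f g h : T -> R).

Definition SM D f := (\esum_(i in D) (`|f i|)%:E < +oo)%E.

Lemma esum_fin D g : (forall i, D i -> 0 <= g i) ->
  (\esum_(i in D) (g i)%:E < +oo)%E -> \esum_(i in D) (g i)%:E \is a fin_num.
Proof.
move=> g0 h; rewrite ge0_fin_numE // esum_ge0 // => i /g0; by rewrite lee_fin.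
Qed.

Lemma esum_lt_le D g h : (forall i, D i -> 0 <= g i <= h i) ->
  (\esum_(i in D) (h i)%:E < +oo)%E -> (\esum_(i in D) (g i)%:E < +oo)%E.
Proof.
move=> gh; apply: le_lt_trans; apply: le_esum => i Di.
by rewrite lee_fin; case/andP: (gh i Di).
Qed.

Lemma fine_esumD D g h : (forall i, D i -> 0 <= g i) -> (forall i, D i -> 0 <= h i) ->
  (\esum_(i in D) (g i)%:E < +oo)%E -> (\esum_(i in D) (h i)%:E < +oo)%E ->
  fine (\esum_(i in D) (g i + h i)%:E) =
  fine (\esum_(i in D) (g i)%:E) + fine (\esum_(i in D) (h i)%:E).
Proof.
move=> g0 h0 gf hf.
rewrite (@eq_esum _ _ _ _ (fun i => (g i)%:E + (h i)%:E)) //.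
rewrite esumD; first by rewrite fineD // esum_fin.
- by move=> i /g0; rewrite lee_fin.
- by move=> i /h0; rewrite lee_fin.
Qed.

Lemma esumD_lt D g h : (forall i, D i -> 0 <= g i) -> (forall i, D i -> 0 <= h i) ->
  (\esum_(i in D) (g i)%:E < +oo)%E -> (\esum_(i in D) (h i)%:E < +oo)%E ->
  (\esum_(i in D) (g i + h i)%:E < +oo)%E.
Proof.
move=> g0 h0 gf hf.
rewrite (@eq_esum _ _ _ _ (fun i => (g i)%:E + (h i)%:E)) //.
rewrite esumD; first exact: lte_add_pinfty.
- by move=> i /g0; rewrite lee_fin.
- by move=> i /h0; rewrite lee_fin.
Qed.

Lemma max_posneg (x : R) : Num.max x 0 - Num.max (- x) 0 = x.
Proof.
rewrite !maxr_absE !subr0 normrN; lra.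
Qed.

Lemma max0_ge (x : R) : 0 <= x -> Num.max x 0 = x.
Proof. by move=> x0; rewrite maxr_absE subr0 ger0_norm //; lra. Qed.

Lemma max0_le (x : R) : x <= 0 -> Num.max x 0 = 0.
Proof. by move=> x0; rewrite maxr_absE subr0 ler0_norm //; lra. Qed.

Lemma rsum_eq D f g : (forall i, D i -> f i = g i) -> rsum D f = rsum D g.
Proof.
move=> fg; rewrite /rsum.
rewrite (@eq_esum _ _ _ (fun i => (Num.max (f i) 0)%:E) (fun i => (Num.max (g i) 0)%:E)); last by move=> i /fg ->.
by rewrite (@eq_esum _ _ _ (fun i => (Num.max (- f i) 0)%:E) (fun i => (Num.max (- g i) 0)%:E)) // => i /fg ->.
Qed.

Lemma rsumE D f g h : (forall i, D i -> 0 <= g i) -> (forall i, D i -> 0 <= h i) ->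
  (\esum_(i in D) (g i)%:E < +oo)%E -> (\esum_(i in D) (h i)%:E < +oo)%E ->
  (forall i, D i -> f i = g i - h i) ->
  rsum D f = fine (\esum_(i in D) (g i)%:E) - fine (\esum_(i in D) (h i)%:E).
Proof.
move=> g0 h0 gf hf fgh.
have P0 i : 0 <= Num.max (f i) 0 by rewrite le_max lexx orbT.
have N0 i : 0 <= Num.max (- f i) 0 by rewrite le_max lexx orbT.
have Pg i : D i -> 0 <= Num.max (f i) 0 <= g i.
  move=> Di; rewrite P0 /= ge_max g0 // andbT fgh //.
  by have := h0 i Di; lra.
have Nh i : D i -> 0 <= Num.max (- f i) 0 <= h i.
  move=> Di; rewrite N0 /= ge_max h0 // andbT fgh //.
  by have := g0 i Di; lra.
have Pf := esum_lt_le Pg gf.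
have Nf := esum_lt_le Nh hf.
have E : fine (\esum_(i in D) (Num.max (f i) 0 + h i)%:E) =
         fine (\esum_(i in D) (Num.max (- f i) 0 + g i)%:E).
  congr fine; apply: eq_esum => i Di; congr EFin.
  rewrite fgh //; have := max_posneg (g i - h i); lra.
rewrite !fine_esumD // in E.
rewrite /rsum; lra.
Qed.

Lemma SM_pos D f : SM D f -> (\esum_(i in D) (Num.max (f i) 0)%:E < +oo)%E.
Proof.
apply: esum_lt_le => i _; rewrite le_max lexx orbT /= ge_max normr_ge0 andbT.
exact: ler_norm.
Qed.

Lemma SM_neg D f : SM D f -> (\esum_(i in D) (Num.max (- f i) 0)%:E < +oo)%E.
Proof.
apply: esum_lt_le => i _; rewrite le_max lexx orbT /= ge_max normr_ge0 andbT.
by rewrite -normrN ler_norm.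
Qed.

Lemma rsumD D f g : SM D f -> SM D g ->
  rsum D (fun i => f i + g i) = rsum D f + rsum D g.
Proof.
move=> Sf Sg.
have P0 (h : T -> R) i : 0 <= Num.max (h i) 0 by rewrite le_max lexx orbT.
have N0 (h : T -> R) i : 0 <= Num.max (- h i) 0 by rewrite le_max lexx orbT.
rewrite (@rsumE D _ (fun i => Num.max (f i) 0 + Num.max (g i) 0)
                    (fun i => Num.max (- f i) 0 + Num.max (- g i) 0)).
- rewrite !fine_esumD //; first by rewrite /rsum opprD addrACA.
  + exact: SM_neg.
  + exact: SM_neg.
  + exact: SM_pos.
  + exact: SM_pos.
- by move=> i _; rewrite addr_ge0.
- by move=> i _; rewrite addr_ge0.
- by apply: esumD_lt => //; apply: SM_pos.
- by apply: esumD_lt => //; apply: SM_neg.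
- move=> i _.
  have := max_posneg (f i); have := max_posneg (g i); lra.
Qed.

Lemma rsumN D f : rsum D (fun i => - f i) = - rsum D f.
Proof.
rewrite /rsum.
rewrite (@eq_esum _ _ _ (fun i => (Num.max (- - f i) 0)%:E) (fun i => (Num.max (f i) 0)%:E)); last by move=> i _; rewrite opprK.
by rewrite opprB.
Qed.

Lemma rsum_ge0E D g : (forall i, D i -> 0 <= g i) ->
  rsum D g = fine (\esum_(i in D) (g i)%:E).
Proof.
move=> g0; rewrite /rsum [X in _ - fine X = _]esum1 /= ?subr0.
  by congr fine; apply: eq_esum => i Di; rewrite max0_ge // g0.
by move=> i Di; rewrite max0_le // oppr_le0 g0.
Qed.

Lemma rsum_ge0 D g : (forall i, D i -> 0 <= g i) -> 0 <= rsum D g.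
Proof.
move=> g0; rewrite rsum_ge0E //; apply: fine_ge0; apply: esum_ge0.
by move=> i /g0; rewrite lee_fin.
Qed.

Lemma SM_le D f h : (forall i, D i -> `|f i| <= h i) ->
  (\esum_(i in D) (h i)%:E < +oo)%E -> SM D f.
Proof.
move=> fh; apply: esum_lt_le => i Di; rewrite normr_ge0 /=; exact: fh.
Qed.

Lemma SMN D f : SM D f -> SM D (fun i => - f i).
Proof.
by move=> Sf; apply: SM_le Sf => i _; rewrite normrN.
Qed.

Lemma SMD D f g : SM D f -> SM D g -> SM D (fun i => f i + g i).
Proof.
move=> Sf Sg; apply: (@SM_le _ _ (fun i => `|f i| + `|g i|)).
  by move=> i _; exact: ler_normD.
by apply: esumD_lt.
Qed.

Lemma rsum_le D f g : SM D f -> SM D g -> (forall i, D i -> f i <= g i) ->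
  rsum D f <= rsum D g.
Proof.
move=> Sf Sg fg.
have H : 0 <= rsum D (fun i => g i + - f i).
  by apply: rsum_ge0 => i Di; rewrite subr_ge0 fg.
rewrite rsumD // ?rsumN in H; last exact: SMN.
lra.
Qed.

Lemma esumZ D (k : R) (a : T -> R) : 0 <= k -> (forall i, 0 <= a i) ->
  \esum_(i in D) (k * a i)%:E = (k%:E * \esum_(i in D) (a i)%:E)%E.
Proof.
move=> k0 a0; rewrite /esum -ereal_supZl //; last first.
  apply/set0P; exists (\sum_(x \in set0) (a x)%:E); exists set0 => //.
  exact: fsets_set0.
congr ereal_sup; apply/seteqP; split => x /=.
- move=> [A fA <-]; exists (\sum_(i \in A) (a i)%:E); first by exists A.
  rewrite ge0_mule_fsumr; last by move=> i; rewrite lee_fin.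
  by apply: eq_fsbigr => i _; rewrite EFinM.
- move=> [y [A fA <-] <-]; exists A => //.
  rewrite ge0_mule_fsumr; last by move=> i; rewrite lee_fin.
  by apply: eq_fsbigr => i _; rewrite EFinM.
Qed.

Lemma rsumZ D (k : R) f : 0 <= k -> SM D f ->
  rsum D (fun i => k * f i) = k * rsum D f.
Proof.
move=> k0 Sf; rewrite /rsum.
rewrite (@eq_esum _ _ _ (fun i => (Num.max (k * f i) 0)%:E) (fun i => (k * Num.max (f i) 0)%:E)); last first.
  by move=> i _; rewrite maxr_pMr // mulr0.
rewrite (@eq_esum _ _ _ (fun i => (Num.max (- (k * f i)) 0)%:E) (fun i => (k * Num.max (- f i) 0)%:E)); last first.
  by move=> i _; rewrite maxr_pMr // mulr0 mulrN.
rewrite !esumZ //; try by move=> i; rewrite le_max lexx orbT.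
rewrite !fineM //.
- by rewrite mulrBr.
- apply: esum_fin; last exact: SM_neg.
  by move=> i _; rewrite le_max lexx orbT.
- apply: esum_fin; last exact: SM_pos.
  by move=> i _; rewrite le_max lexx orbT.
Qed.

Lemma SMZ D (k : R) f : SM D f -> SM D (fun i => k * f i).
Proof.
move=> Sf; apply: (@SM_le _ _ (fun i => `|k| * `|f i|)).
  by move=> i _; rewrite normrM.
rewrite esumZ //.
by apply: lte_mul_pinfty; rewrite ?lee_fin.
Qed.

End RsumFacts.
Section DomConv.
Variables (R : realType) (T : choiceType).

Lemma cvg_sum_seq (s : seq T) (g : R -> T -> R) :
  (forall i, i \in s -> (fun t => g t i) t @[t --> (0:R)^'+] --> (0:R)) ->
  (fun t => \sum_(i <- s) g t i) t @[t --> (0:R)^'+] --> (0:R).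
Proof.
elim: s => [|j s IH] H.
  under eq_fun do rewrite big_nil; exact: cvg_cst.
under eq_fun do rewrite big_cons.
have H1 := H j (mem_head j s).
have H2 : (fun t => \sum_(i <- s) g t i) t @[t --> (0:R)^'+] --> (0:R).
  by apply: IH => i si; apply: H; rewrite inE si orbT.
have := cvgD H1 H2; rewrite addr0. by apply.
Qed.

Lemma DC (D : set T) (g : R -> T -> R) (M : T -> R) :
  (forall t i, 0 < t <= 1 -> D i -> 0 <= g t i <= M i) ->
  (\esum_(i in D) (M i)%:E < +oo)%E ->
  (forall i, D i -> (fun t => g t i) t @[t --> (0:R)^'+] --> (0:R)) ->
  forall e, 0 < e -> exists t, 0 < t <= 1 /\ rsum D (g t) <= e.
Proof.
move=> gM Mf gc e e0.
have h01 : 0 < (1:R) <= 1 by rewrite ltr01 lexx.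
have M0 i : D i -> 0 <= M i.
  by move=> Di; case/andP: (gM 1 i h01 Di) => /le_trans; apply.
have Sfin : \esum_(i in D) (M i)%:E \is a fin_num by apply: esum_fin.
have e20 : 0 < e / 2 by rewrite divr_gt0.
have [x [F [finF FD] <-] Sx] :=
  @ub_ereal_sup_adherent _ [set \sum_(x \in A) (M x)%:E | A in fsets D] _ e20 Sfin.
have {}Sx : (esum D (fun i => (M i)%:E) - (e / 2)%:E < \sum_(x \in F) (M x)%:E)%E := Sx.
pose s : seq T := finmap.enum_fset (fset_set F).
have sF i : (i \in s) = (i \in F) by exact: (in_fset_set finF i).
have cs : (fun t => \sum_(i <- s) g t i) t @[t --> (0:R)^'+] --> (0:R).
  apply: cvg_sum_seq => i; rewrite sF inE => /FD; exact: gc.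
have Hnear : \forall t \near (0:R)^'+, 0 < t /\ t < 1 /\ `|\sum_(i <- s) g t i| < e / 2.
  near=> t; split; [|split].
  - near: t; exact: nbhs_right_gt.
  - near: t; exact: nbhs_right_lt.
  - near: t; exact: cvgr0_norm_lt.
have [t [t0 [t1 ts]]] := filter_ex Hnear.
have t01 : 0 < t <= 1 by rewrite t0 ltW.
exists t; split => //.
have g0 i : D i -> 0 <= g t i by move=> Di; case/andP: (gM t i t01 Di).
rewrite rsum_ge0E //.
have gMi i : D i -> g t i <= M i by move=> Di; case/andP: (gM t i t01 Di).
rewrite (esumID F); last by move=> i /g0; rewrite lee_fin.
rewrite (esumID F) in Sx; last by move=> i /M0; rewrite lee_fin.
rewrite (setIidr FD) in Sx *.
rewrite esum_fset // ?fsumEFin //; last by move=> i; rewrite inE => /FD /g0; rewrite lee_fin.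
rewrite esum_fset // ?fsumEFin // in Sx; last by move=> i; rewrite inE => /FD /M0; rewrite lee_fin.
have RMle : (\esum_(i in D `&` ~` F) (g t i)%:E <= \esum_(i in D `&` ~` F) (M i)%:E)%E.
  by apply: le_esum => i [Di _]; rewrite lee_fin gMi.
have RM0 : (0 <= \esum_(i in D `&` ~` F) (g t i)%:E)%E.
  by apply: esum_ge0 => i [Di _]; rewrite lee_fin g0.
have RMfin : \esum_(i in D `&` ~` F) (M i)%:E \is a fin_num.
  apply: esum_fin; first by move=> i [Di _]; exact: M0.
  apply: le_lt_trans Mf; rewrite [leRHS](esumID F); last by move=> i /M0; rewrite lee_fin.
  by rewrite leeDr // esum_ge0 // => i [Di _]; rewrite lee_fin M0.
have Rgfin : \esum_(i in D `&` ~` F) (g t i)%:E \is a fin_num.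
  rewrite ge0_fin_numE //; apply: le_lt_trans RMle _.
  by rewrite -ge0_fin_numE // -(fineK RMfin) lee_fin fine_ge0 // esum_ge0 // => i [Di _]; rewrite lee_fin M0.
move: RMle Sx; rewrite -(fineK RMfin) -(fineK Rgfin) -!EFinD -?EFinB ?lee_fin ?lte_fin /=.
rewrite !fsbig_finite // -/s.
set A := fine (\esum_(i in _) (g t i)%:E).
set B := fine (\esum_(i in _) (M i)%:E).
set a := \sum_(i <- s) g t i; set b := \sum_(i <- s) M i.
move=> H1 H2.
have := ler_norm a; lra.
Unshelve. all: by end_near.
Qed.
End DomConv.
Section Main.
Variables (R : realType) (X : countType) (b : X -> X -> R) (p : R) (V : set X).
Hypothesis p1 : 1 < p.
Hypothesis b0 : forall x y, 0 <= b x y.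

Let p0 : 0 < p. Proof. by apply: lt_trans p1. Qed.

Let U := closure_V b V.
Let DD := U `*` U.

Definition Fw (w : X -> R) (xy : X * X) := b xy.1 xy.2 * `|w xy.1 - w xy.2| `^ p.

Lemma Fw_ge0 w xy : 0 <= Fw w xy.
Proof. by rewrite /Fw mulr_ge0 // powR_ge0. Qed.

Lemma EpE w : Ep b p U w w = 2^-1 * rsum DD (Fw w).
Proof.
rewrite /Ep; congr (_ * _); apply: rsum_eq => xy _.
by rewrite /Fw -mulrA spow_mul_self.
Qed.

Lemma SM_Fw w : Dp b p V w -> SM DD (Fw w).
Proof.
move=> Dw; apply: (SM_le (h := Fw w)) => //.
by move=> i _; rewrite ger0_norm // Fw_ge0.
Qed.

Lemma SM_G (w1 w2 w3 : X -> R) (Hf : X * X -> R) :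
  Dp b p V w1 -> Dp b p V w2 -> Dp b p V w3 ->
  (forall xy, Hf xy = b xy.1 xy.2 * spow p (w1 xy.1 - w1 xy.2) *
                      ((w2 xy.1 - w2 xy.2) - (w3 xy.1 - w3 xy.2))) ->
  SM DD Hf.
Proof.
move=> D1 D2 D3 HE.
apply: (SM_le (h := fun xy => ((Fw w1 xy + Fw w1 xy) + Fw w2 xy) + Fw w3 xy)).
  move=> xy _; rewrite HE -mulrA normrM ger0_norm // /Fw.
  have := spow_bound2 p1 (w1 xy.1 - w1 xy.2) (w2 xy.1 - w2 xy.2) (w3 xy.1 - w3 xy.2).
  move=> H; have := b0 xy.1 xy.2 => Hb.
  have -> : b xy.1 xy.2 * `|w1 xy.1 - w1 xy.2| `^ p + b xy.1 xy.2 * `|w1 xy.1 - w1 xy.2| `^ p +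
     b xy.1 xy.2 * `|w2 xy.1 - w2 xy.2| `^ p + b xy.1 xy.2 * `|w3 xy.1 - w3 xy.2| `^ p =
     b xy.1 xy.2 * (2 * `|w1 xy.1 - w1 xy.2| `^ p + `|w2 xy.1 - w2 xy.2| `^ p + `|w3 xy.1 - w3 xy.2| `^ p) by ring.
  by rewrite ler_wpM2l.
have F0 w : forall i, DD i -> 0 <= Fw w i by move=> i _; exact: Fw_ge0.
apply: esumD_lt; [|exact: F0| |exact: D3].
  by move=> i _; rewrite !addr_ge0 // Fw_ge0.
apply: esumD_lt; [|exact: F0| |exact: D2].
  by move=> i _; rewrite !addr_ge0 // Fw_ge0.
by apply: esumD_lt; [exact: F0|exact: F0|exact: D1|exact: D1].
Qed.

End Main.
Lemma conv_pow (R : realType) (p : R) (A B t : R) : 0 <= p -> 0 <= t <= 1 ->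
  `|A + t * (B - A)| `^ p <= `|A| `^ p + `|B| `^ p.
Proof.
move=> p0 /andP[t0 t1].
have H m : `|A| <= m -> `|B| <= m -> `|A + t * (B - A)| <= m.
  move=> hA hB.
  have -> : A + t * (B - A) = (1 - t) * A + t * B by ring.
  apply: le_trans (ler_normD _ _) _.
  rewrite !normrM (ger0_norm t0) ger0_norm ?subr_ge0 //.
  nra.
have [AB|BA] := leP `|A| `|B|.
  apply: le_trans (powR_mono p0 (normr_ge0 _) (H _ AB (lexx _))) _.
  by rewrite lerDr powR_ge0.
apply: le_trans (powR_mono p0 (normr_ge0 _) (H _ (lexx _) (ltW BA))) _.
by rewrite lerDl powR_ge0.
Qed.

Section Main2.
Variables (R : realType) (X : countType) (b : X -> X -> R) (p : R) (V : set X).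
Variables (psi theta : X -> R).
Hypothesis p1 : 1 < p.
Hypothesis b0 : forall x y, 0 <= b x y.

Let p0 : 0 < p. Proof. by apply: lt_trans p1. Qed.
Let U := closure_V b V.
Let DD := U `*` U.

Lemma K_conv u v t : Kset b p V psi theta u -> Kset b p V psi theta v -> 0 <= t <= 1 ->
  Kset b p V psi theta (fun x => u x + t * (v x - u x)).
Proof.
move=> [Du [Pu Bu]] [Dv [Pv Bv]] t01; split; [|split].
- rewrite /Dp; apply: (esum_lt_le (h := fun xy => Fw b p u xy + Fw b p v xy)).
    move=> xy _; rewrite mulr_ge0 ?powR_ge0 //=.
    rewrite /Fw -mulrDr ler_wpM2l //.
    have -> : u xy.1 + t * (v xy.1 - u xy.1) - (u xy.2 + t * (v xy.2 - u xy.2)) =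
      (u xy.1 - u xy.2) + t * ((v xy.1 - v xy.2) - (u xy.1 - u xy.2)) by ring.
    by apply: conv_pow => //; exact: ltW.
  by apply: esumD_lt => //; move=> i _; exact: Fw_ge0.
- move=> x Vx; have := Pu x Vx; have := Pv x Vx; case/andP: t01 => t0 t1; nra.
- by move=> x Bx; rewrite Bu // Bv // subrr mulr0 addr0.
Qed.

End Main2.
Section Main3.
Variables (R : realType) (X : countType) (b : X -> X -> R) (p : R) (V : set X).
Variables (psi theta : X -> R).
Hypothesis p1 : 1 < p.
Hypothesis b0 : forall x y, 0 <= b x y.

Let p0 : 0 < p. Proof. by apply: lt_trans p1. Qed.

Lemma forward u v : Kset b p V psi theta u -> Kset b p V psi theta v ->
  0 <= Ep b p (closure_V b V) u (v \- u) ->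
  Ep b p (closure_V b V) u u <= Ep b p (closure_V b V) v v.
Proof.
move=> Ku Kv H.
have Du := Ku.1; have Dv := Kv.1.
rewrite !EpE //.
set G := fun xy : X * X => b xy.1 xy.2 * spow p (u xy.1 - u xy.2) * ((v \- u) xy.1 - (v \- u) xy.2).
have HG : 0 <= rsum (closure_V b V `*` closure_V b V) G.
  by move: H; rewrite /Ep pmulr_rge0 // invr_gt0.
have SG : SM (closure_V b V `*` closure_V b V) G.
  apply: (SM_G p1 b0 Du Dv Du) => xy; rewrite /G /=; congr (_ * _); ring.
have Hle : rsum (closure_V b V `*` closure_V b V) (fun xy => Fw b p u xy + p * G xy)
        <= rsum (closure_V b V `*` closure_V b V) (Fw b p v).
  apply: rsum_le.
  - by apply: SMD; [exact: SM_Fw | exact: SMZ].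
  - exact: SM_Fw.
  - move=> xy _; rewrite /Fw /G /=.
    have := grad_ineq p1 (u xy.1 - u xy.2) (v xy.1 - v xy.2).
    have Hb := b0 xy.1 xy.2.
    move=> Hg.
    have -> : b xy.1 xy.2 * `|u xy.1 - u xy.2| `^ p +
      p * (b xy.1 xy.2 * spow p (u xy.1 - u xy.2) * (v xy.1 - u xy.1 - (v xy.2 - u xy.2))) =
      b xy.1 xy.2 * (`|u xy.1 - u xy.2| `^ p +
         p * spow p (u xy.1 - u xy.2) * (v xy.1 - v xy.2 - (u xy.1 - u xy.2))) by ring.
    by rewrite ler_wpM2l.
rewrite rsumD in Hle; [|exact: SM_Fw|exact: SMZ].
rewrite rsumZ in Hle; [|exact: ltW|exact: SG].
apply: ler_wpM2l; first by rewrite invr_ge0.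
have : 0 <= p * rsum (closure_V b V `*` closure_V b V) G by rewrite mulr_ge0 // ltW.
move: Hle; set a := rsum _ _; set c := rsum _ _; set d := rsum _ _.
lra.
Qed.

End Main3.
Lemma spowC_mono (R : realType) (p : R) (a c s t : R) : 1 < p -> s <= t ->
  spow p (a + s * c) * c <= spow p (a + t * c) * c.
Proof.
move=> p1 st.
have [c0|c0] := leP 0 c.
  apply: ler_wpM2r => //; apply: spow_mono => //.
  by rewrite lerD2l ler_wpM2r.
apply: ler_wnM2r; first exact: ltW.
apply: spow_mono => //.
by rewrite lerD2l ler_wnM2r // ltW.
Qed.

Section Main4.
Variables (R : realType) (X : countType) (b : X -> X -> R) (p : R) (V : set X).
Variables (psi theta : X -> R).
Hypothesis p1 : 1 < p.
Hypothesis b0 : forall x y, 0 <= b x y.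

Let p0 : 0 < p. Proof. by apply: lt_trans p1. Qed.

Lemma backward u v : Kset b p V psi theta u -> Kset b p V psi theta v ->
  (forall w, Kset b p V psi theta w ->
     Ep b p (closure_V b V) u u <= Ep b p (closure_V b V) w w) ->
  0 <= Ep b p (closure_V b V) u (v \- u).
Proof.
move=> Ku Kv Hmin.
have Du := Ku.1; have Dv := Kv.1.
set DD := closure_V b V `*` closure_V b V.
pose A xy := u xy.1 - u xy.2.
pose C xy := (v \- u) xy.1 - (v \- u) xy.2.
pose vt t := fun x => u x + t * (v x - u x).
pose H t xy := b xy.1 xy.2 * spow p (A xy + t * C xy) * C xy.
have gradvt t xy : vt t xy.1 - vt t xy.2 = A xy + t * C xy by rewrite /vt /A /C /=; ring.
have SH t : 0 <= t <= 1 -> SM DD (H t).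
  move=> t01; have Kt := K_conv p1 b0 Ku Kv t01.
  apply: (SM_G p1 b0 Kt.1 Dv Du) => xy.
  rewrite /H -gradvt /C /=; congr (_ * _); ring.
have Hpos t : 0 < t <= 1 -> 0 <= rsum DD (H t).
  move=> /andP[t0 t1]; have t01 : 0 <= t <= 1 by rewrite ltW.
  have Kt := K_conv p1 b0 Ku Kv t01.
  have Hm := Hmin _ Kt; rewrite !EpE // in Hm.
  have Hle : rsum DD (Fw b p (vt t)) <= rsum DD (fun xy => Fw b p u xy + (t * p) * H t xy).
    apply: rsum_le.
    - exact: SM_Fw Kt.1.
    - by apply: SMD; [exact: SM_Fw | apply: SMZ; exact: SH].
    - move=> xy _; rewrite /Fw gradvt /H.
      have Hg := grad_ineq p1 (A xy + t * C xy) (A xy).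
      have E1 : A xy - (A xy + t * C xy) = - (t * C xy) by ring.
      rewrite E1 in Hg.
      have Hb := b0 xy.1 xy.2.
      have -> : b xy.1 xy.2 * `|A xy| `^ p + t * p * (b xy.1 xy.2 * spow p (A xy + t * C xy) * C xy)
        = b xy.1 xy.2 * (`|A xy| `^ p + t * p * spow p (A xy + t * C xy) * C xy) by ring.
      rewrite ler_wpM2l //.
      set P := spow p _ in Hg *; set Q := `|A xy + t * C xy| `^ p in Hg *.
      set Z := `|A xy| `^ p in Hg *.
      nra.
  rewrite rsumD in Hle; [|exact: SM_Fw|apply: SMZ; exact: SH].
  rewrite rsumZ in Hle; [|by rewrite mulr_ge0 // ltW|exact: SH].
  have : 0 <= (t * p) * rsum DD (H t).
    move: Hm Hle; set a := rsum _ _; set c := rsum _ _; set d := rsum _ _.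
    lra.
  by rewrite pmulr_rge0 // mulr_gt0.
pose g t xy := H t xy - H 0 xy.
have gM t i : 0 < t <= 1 -> DD i -> 0 <= g t i <= g 1 i.
  move=> /andP[t0 t1] _; rewrite /g /H.
  have Hb := b0 i.1 i.2.
  have m1 := spowC_mono (A i) (C i) p1 (ltW t0).
  have m2 := spowC_mono (A i) (C i) p1 t1.
  move: m1 m2; set X0 := spow p (A i + 0 * C i); set Xt := spow p (A i + t * C i).
  set X1 := spow p (A i + 1 * C i) => m1 m2.
  apply/andP; split; nra.
have gf : (\esum_(i in DD) (g 1 i)%:E < +oo)%E.
  have Sg : SM DD (g 1).
    apply: SMD; first by apply: SH; rewrite ler01 lexx.
    by apply: SMN; apply: SH; rewrite lexx ler01.
  apply: (esum_lt_le (h := fun i => `|g 1 i|)) Sg => i Di.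
  have := gM 1 i; rewrite ltr01 lexx => /(_ isT Di) /andP[g0 _].
  by rewrite g0 ler_norm.
have gc i : DD i -> (fun t => g t i) t @[t --> (0:R)^'+] --> (0:R).
  move=> _.
  have c1 : (fun t => A i + t * C i) t @[t --> (0:R)^'+] --> A i.
    have h3 : (fun t => A i + t * C i) t @[t --> (0:R)] --> A i + 0 * C i.
      by apply: cvgD; [exact: cvg_cst | apply: cvgMl; exact: cvg_id].
    rewrite mul0r addr0 in h3; exact: cvg_within_filter h3.
  have c2 := cvg_comp _ _ c1 (spow_cvg (a := A i) p1).
  have c4 : (fun t => b i.1 i.2 * spow p (A i + t * C i) * C i - H 0 i) t @[t --> (0:R)^'+]
     --> b i.1 i.2 * spow p (A i) * C i - H 0 i.
    apply: cvgB; last exact: cvg_cst.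
    by apply: cvgMl; apply: cvgMr; exact: c2.
  rewrite /H mul0r addr0 subrr in c4.
  by rewrite /g /H mul0r addr0; exact: c4.
have DCe := DC gM gf gc.
have key e : 0 < e -> 0 <= rsum DD (H 0) + e.
  move=> e0; have [t [t01 Hte]] := DCe e e0.
  have t01' : 0 <= t <= 1 by case/andP: t01 => t0 ->; rewrite ltW.
  have h01 : 0 <= (0:R) <= 1 by rewrite lexx ler01.
  have E : rsum DD (H t) = rsum DD (H 0) + rsum DD (g t).
    rewrite -rsumD; [|exact: SH|by apply: SMD; [exact: SH|apply: SMN; exact: SH]].
    by apply: rsum_eq => xy _; rewrite /g; ring.
  have := Hpos t t01; lra.
have H0 : 0 <= rsum DD (H 0).
  rewrite leNgt; apply/negP => neg.
  have := key (- rsum DD (H 0) / 2); rewrite divr_gt0 ?oppr_gt0 // => /(_ isT).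
  lra.
rewrite /Ep; apply: mulr_ge0; first by rewrite invr_ge0.
rewrite (rsum_eq (g := H 0)) // => xy _.
by rewrite /H mul0r addr0.
Qed.

End Main4.
Unset Implicit Arguments.

Theorem lemma3p23 (R : realType) (X : countType) (b : X -> X -> R) (m : X -> R)
  (p : R) (V : set X) (psi theta : X -> R) (u : X -> R) :
  weighted_graph b m -> 1 < p -> Kset b p V psi theta u ->
  (obstacle_solution b p V psi theta u <->
   forall v, Kset b p V psi theta v ->
     Ep b p (closure_V b V) u u <= Ep b p (closure_V b V) v v).
Proof.
move=> WG p1 Ku.
have b0 : forall x y, 0 <= b x y by case: WG => _ [_ [h _]].
split.
- move=> [_ Hvar] v Kv; exact: (forward p1 b0 Ku Kv (Hvar v Kv)).
- move=> Hmin; split => // v Kv; exact: (backward p1 b0 Ku Kv Hmin).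
Qed.
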